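(* For $i=1,2$ let $\sigma_i=(h_i:M_i:x_i:y_i:r_i)\in X\subseteq\mathbb{P}^{16}_{\mathbb{C}}$. Consider the tuple $$\big(h_1h_2 : M_1M_2 : M_2^t x_1+h_1x_2 : h_2y_1+M_1y_2 : h_2r_1+h_1r_2-2\langle x_1,y_2\rangle\big)$$ (matrices and vectors replaced by their entries). If $h_1\neq 0$ or $h_2\neq 0$, then not all entries of this tuple vanish, i.e. it defines a point of $\mathbb{P}^{16}_{\mathbb{C}}$.
   Context: Write a direct isometry of $\mathbb{R}^3$ as $v\mapsto Mv+y$ with $M\in SO(3)$, $y\in\mathbb{R}^3$. Put $x=-M^ty$ and $r=\langle y,y\rangle$. Identify the isometry with the point $(h:M:x:y:r)=(1:m_{11}:\dots:m_{33}:x_1:x_2:x_3:y_1:y_2:y_3:r)$ of $\mathbb{P}^{16}_{\mathbb{C}}$; the coordinates are $h$, the nine entries of $M$, $x$, $y$ and $r$. The variety $X\subseteq\mathbb{P}^{16}_{\mathbb{C}}$ is the complexification of the Zariski closure of the image of the group of direct isometries under this map. Equivalently, it is the complex zero set of all real polynomials vanishing on that image. Here $\langle u,u'\rangle=u^tu'$ is the complex bilinear (not Hermitian) form on $\mathbb{C}^3$. When both points are direct isometries, the tuple is the point of the composition of the two isometries. *)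

(* Defs.v *)
From HB Require Import structures.
From mathcomp Require Import all_boot all_order all_algebra.
From mathcomp Require Import reals.
From mathcomp Require Import complex.
From mathcomp Require Import mpoly.

Set Implicit Arguments.
Unset Strict Implicit.
Unset Printing Implicit Defensive.

Import Order.TTheory GRing.Theory Num.Theory.
Local Open Scope ring_scope.

(* A tuple (h : M : x : y : r) with entries in a ring T, laid out as the
   17 homogeneous coordinates (h, m11, m12, ..., m33, x1, x2, x3, y1, y2, y3, r)
   (mxvec is row-major: index of M i j is 3*i + j). *)
Definition coords {T : pzRingType} (h : T) (M : 'M[T]_3) (x y : 'cV[T]_3) (r : T)
  : 'I_17 -> T :=
  fun k => (row_mx (h%:M : 'M[T]_1)
            (row_mx (mxvec M) (row_mx x^T (row_mx y^T (r%:M : 'M[T]_1))))) 0 k.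

Definition bil {T : pzRingType} (u v : 'cV[T]_3) : T := (u^T *m v) 0 0.

(* Direct isometry v |-> M v + y with M in SO(3) (real entries). *)
Definition is_SO3 {R : realType} (M : 'M[R]_3) : Prop :=
  M^T *m M = 1%:M /\ \det M = 1.

Definition iso_point {R : realType} (M : 'M[R]_3) (y : 'cV[R]_3) : 'I_17 -> R :=
  coords 1 M (- (M^T *m y)) y (bil y y).

Definition vanishes_on_isometries {R : realType} (f : {mpoly R[17]}) : Prop :=
  (exists d, f \is [in R[17], d.-homog]) /\
  forall (M : 'M[R]_3) (y : 'cV[R]_3), is_SO3 M -> f.@[iso_point M y] = 0.

Definition inX {R : realType} (v : 'I_17 -> R[i]) : Prop :=
  (exists k, v k != 0) /\
  forall f : {mpoly R[17]}, vanishes_on_isometries f ->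
    (map_mpoly (fun a : R => real_complex R a) f).@[v] = 0.

Definition comp_tuple {T : pzRingType}
  (h1 : T) (M1 : 'M[T]_3) (x1 y1 : 'cV[T]_3) (r1 : T)
  (h2 : T) (M2 : 'M[T]_3) (x2 y2 : 'cV[T]_3) (r2 : T) : 'I_17 -> T :=
  coords (h1 * h2) (M1 *m M2) (M2^T *m x1 + h1 *: x2) (h2 *: y1 + M1 *m y2)
         (h2 * r1 + h1 * r2 - 2%:R * bil x1 y2).

(* Main.v *)
Require Import Defs.
From HB Require Import structures.
From mathcomp Require Import all_boot all_order all_algebra.
From mathcomp Require Import reals.
From mathcomp Require Import complex.
From mathcomp Require Import mpoly.
Set Implicit Arguments.
Unset Strict Implicit.
Import Order.TTheory GRing.Theory Num.Theory.
Local Open Scope ring_scope.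

Definition idxM (i j : 'I_3) : 'I_17 := rshift 1 (lshift (3+(3+1)) (mxvec_index i j)).
Definition idx0 : 'I_17 := lshift (3*3 + (3+(3+1))) (ord0 : 'I_1).

Lemma coordsM (T : pzRingType) h (M : 'M[T]_3) x y r i j :
  coords h M x y r (idxM i j) = M i j.
Proof. by rewrite /coords /idxM row_mxEr row_mxEl mxvecE. Qed.

Lemma coords0 (T : pzRingType) h (M : 'M[T]_3) x y r :
  coords h M x y r idx0 = h.
Proof. by rewrite /coords /idx0 row_mxEl mxE. Qed.

Section P.
Variable R : realType.
Definition PM : 'M[{mpoly R[17]}]_3 := \matrix_(i, j) 'X_(idxM i j).
Definition fdet : {mpoly R[17]} := \det PM - 'X_idx0 ^+ 3.

Lemma fdet_eval (S : comNzRingType) (g : {rmorphism {mpoly R[17]} -> S}) w :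
  (forall k, g 'X_k = w k) ->
  g fdet = \det (\matrix_(i, j) w (idxM i j)) - w idx0 ^+ 3.
Proof.
move=> gX; rewrite /fdet rmorphB rmorphXn gX -det_map_mx; congr (\det _ - _).
by apply/matrixP=> i j; rewrite !mxE gX.
Qed.

Lemma fdet_homog : fdet \is [in R[17], 3.-homog].
Proof.
have hX : forall k, ('X_k : {mpoly R[17]}) \is [in R[17], 1.-homog].
  by move=> k; rewrite dhomogX /= mdeg1.
apply: rpredB; last by rewrite -[3%N]/(1*3)%N; apply: dhomogMn.
rewrite /determinant; apply: rpred_sum => s _; rewrite rpredMsign.
rewrite !big_ord_recr big_ord0 /= mul1r !mxE -[3%N]/(1 + 1 + 1)%N.
by apply: dhomogM; [apply: dhomogM|]; apply: hX.
Qed.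
End P.

Lemma inX_det (R : realType) h (M : 'M[R[i]]_3) x y r :
  inX (coords h M x y r) -> \det M = h ^+ 3.
Proof.
case=> _ /(_ (fdet R)) H.
have V : vanishes_on_isometries (fdet R).
  split; first by exists 3%N; apply: fdet_homog.
  move=> N z [_ dN]; rewrite (@fdet_eval R R (meval (iso_point N z) : {rmorphism _ -> _}) (iso_point N z)).
    have -> : \matrix_(i, j) iso_point N z (idxM i j) = N.
      by apply/matrixP=> i j; rewrite mxE /iso_point coordsM.
    by rewrite /iso_point coords0 dN expr1n subrr.
  by move=> k /=; rewrite mevalXU.
have E := (@fdet_eval R _ ((meval (coords h M x y r) \o map_mpoly (real_complex R)) : {rmorphism _ -> _}) (coords h M x y r)).
move: (H V); rewrite /= in E; rewrite E.
  have -> : \matrix_(i, j) coords h M x y r (idxM i j) = M.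
    by apply/matrixP=> i j; rewrite mxE coordsM.
  by rewrite coords0 => /eqP; rewrite subr_eq0 => /eqP.
by move=> k /=; rewrite map_mpolyX mevalXU.
Qed.

Lemma coords_eq0 (T : pzRingType) h (M : 'M[T]_3) x y r :
  (forall k, coords h M x y r k = 0) ->
  [/\ h = 0, M = 0, x = 0, y = 0 & r = 0].
Proof.
move=> H.
have /eqP : row_mx (h%:M : 'M[T]_1)
            (row_mx (mxvec M) (row_mx x^T (row_mx y^T (r%:M : 'M[T]_1)))) = 0.
  by apply/matrixP=> i k; rewrite (ord1 i) [RHS]mxE; exact: H k.
rewrite !row_mx_eq0 mxvec_eq0 !trmx_eq0 => /and5P[/eqP h0 /eqP -> /eqP -> /eqP -> /eqP r0].
split=> //.
  by have := congr1 (fun A : 'M[T]_1 => A 0 0) h0; rewrite !mxE.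
by have := congr1 (fun A : 'M[T]_1 => A 0 0) r0; rewrite !mxE.
Qed.

Lemma coords00 (T : pzRingType) k :
  coords (0 : T) 0 0 0 0 k = 0.
Proof.
by rewrite /coords linear0 trmx0 !raddf0 !row_mx0 mxE.
Qed.

Lemma bil0 (T : pzRingType) (y : 'cV[T]_3) : bil 0 y = 0.
Proof. by rewrite /bil trmx0 mul0mx mxE. Qed.
Lemma bil0r (T : pzRingType) (y : 'cV[T]_3) : bil y 0 = 0.
Proof. by rewrite /bil mulmx0 mxE. Qed.

Unset Implicit Arguments.
Theorem mainTheorem1 (R : realType)
  (h1 : R[i]) (M1 : 'M[R[i]]_3) (x1 y1 : 'cV[R[i]]_3) (r1 : R[i])
  (h2 : R[i]) (M2 : 'M[R[i]]_3) (x2 y2 : 'cV[R[i]]_3) (r2 : R[i]) :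
  inX (coords h1 M1 x1 y1 r1) ->
  inX (coords h2 M2 x2 y2 r2) ->
  (h1 != 0 \/ h2 != 0) ->
  exists k : 'I_17, comp_tuple h1 M1 x1 y1 r1 h2 M2 x2 y2 r2 k != 0.
Proof.
move=> X1 X2 H12.
have d1 := inX_det X1; have d2 := inX_det X2.
apply/existsP; rewrite -negb_forall; apply/negP=> /forallP H0.
have /coords_eq0 [Eh EM Ex Ey Er] :
    forall k, coords (h1 * h2) (M1 *m M2) (M2^T *m x1 + h1 *: x2) (h2 *: y1 + M1 *m y2)
         (h2 * r1 + h1 * r2 - 2%:R * bil x1 y2) k = 0.
  by move=> k; apply/eqP; exact: H0 k.
case: (eqVneq h1 0) => [h10|h1n0].
- have h2n0 : h2 != 0 by case: H12 => //; rewrite h10 eqxx.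
  have U2 : M2 \in unitmx by rewrite unitmxE d2 unitfE expf_neq0.
  have M10 : M1 = 0 by rewrite -(mulmxK U2 M1) EM mul0mx.
  move: Ey; rewrite M10 mul0mx addr0 => /eqP; rewrite scaler_eq0 (negPf h2n0) /= => /eqP y10.
  move: Ex; rewrite h10 scale0r addr0 => Ex.
  have x10 : x1 = 0.
    by rewrite -(mulKmx (_ : M2^T \in unitmx) x1) ?Ex ?mulmx0 // unitmx_tr.
  move: Er; rewrite h10 x10 bil0 mul0r mulr0 subr0 addr0 => /eqP.
  rewrite mulf_eq0 (negPf h2n0) /= => /eqP r10.
  case: X1 => [[k]]; by rewrite h10 M10 x10 y10 r10 coords00 eqxx.
- have h20 : h2 = 0 by move/eqP: Eh; rewrite mulf_eq0 (negPf h1n0) /= => /eqP.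
  have U1 : M1 \in unitmx by rewrite unitmxE d1 unitfE expf_neq0.
  have M20 : M2 = 0 by rewrite -(mulKmx U1 M2) EM mulmx0.
  move: Ey; rewrite h20 scale0r add0r => Ey.
  have y20 : y2 = 0 by rewrite -(mulKmx U1 y2) Ey mulmx0.
  move: Ex; rewrite M20 trmx0 mul0mx add0r => /eqP; rewrite scaler_eq0 (negPf h1n0) /= => /eqP x20.
  move: Er; rewrite h20 y20 bil0r mul0r mulr0 subr0 add0r => /eqP.
  rewrite mulf_eq0 (negPf h1n0) /= => /eqP r20.
  case: X2 => [[k]]; by rewrite h20 M20 x20 y20 r20 coords00 eqxx.
Qed.
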